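(* For all $\{\sigma_{i,A}\;\vert\; i\in I\}\subseteq\mathfrak{S}_A$ and $\sigma_B\in\mathfrak{S}_B$, $$\iota(\inf^{\mathfrak{S}_A}_{i\in I}\sigma_{i,A},\sigma_B)=\inf^{\check{S}_{AB}}_{i\in I}\iota(\sigma_{i,A},\sigma_B),$$ and for all $\{\sigma_{i,B}\;\vert\; i\in I\}\subseteq\mathfrak{S}_B$ and $\sigma_A\in\mathfrak{S}_A$, $$\iota(\sigma_A,\inf^{\mathfrak{S}_B}_{i\in I}\sigma_{i,B})=\inf^{\check{S}_{AB}}_{i\in I}\iota(\sigma_A,\sigma_{i,B}).$$
   Context: $\mathfrak{B}=\{\mathbf{Y},\mathbf{N},\bot\}$ with $\bot$ below the incomparable $\mathbf{Y},\mathbf{N}$, meet $\wedge$, involution $\overline{\cdot}$ exchanging $\mathbf{Y},\mathbf{N}$, and commutative product $\bullet$ with $x\bullet\mathbf{Y}=x$, $x\bullet\mathbf{N}=\mathbf{N}$, $\bot\bullet\bot=\bot$. $(\mathfrak{S}_A,\mathfrak{E}_A,\epsilon^{\mathfrak{S}_A})$, $(\mathfrak{S}_B,\mathfrak{E}_B,\epsilon^{\mathfrak{S}_B})$ are States/Effects Chu spaces (down-complete Inf semi-lattices of states and effects, infima written $\inf$, evaluation maps preserving infima in each variable, with negation of effects and a constant-$\mathbf{Y}$ effect $\mathfrak{Y}_{\mathfrak{E}}$). $\check{S}_{AB}$ is the maximal tensor product: the set of maps $\Phi:\mathfrak{E}_A\times\mathfrak{E}_B\to\mathfrak{B}$ preserving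 arbitrary infima in each variable, with $\Phi(\overline{\mathfrak{l}_A},\mathfrak{Y}_{\mathfrak{E}_B})=\overline{\Phi(\mathfrak{l}_A,\mathfrak{Y}_{\mathfrak{E}_B})}$, $\Phi(\mathfrak{Y}_{\mathfrak{E}_A},\overline{\mathfrak{l}_B})=\overline{\Phi(\mathfrak{Y}_{\mathfrak{E}_A},\mathfrak{l}_B)}$, $\Phi(\mathfrak{Y}_{\mathfrak{E}_A},\mathfrak{Y}_{\mathfrak{E}_B})=\mathbf{Y}$, ordered pointwise (infima computed pointwise). The pure tensor embedding $\iota:\mathfrak{S}_A\times\mathfrak{S}_B\to\check{S}_{AB}$ is $\iota(\sigma_A,\sigma_B)(\mathfrak{l}_A,\mathfrak{l}_B)=\epsilon^{\mathfrak{S}_A}_{\mathfrak{l}_A}(\sigma_A)\bullet\epsilon^{\mathfrak{S}_B}_{\mathfrak{l}_B}(\sigma_B)$. *)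

(* Defs.v *)
Inductive B3 : Type := Yb | Nb | Bot.

Definition leB (x y : B3) : Prop := x = Bot \/ x = y.

Definition negB (x : B3) : B3 :=
  match x with Yb => Nb | Nb => Yb | Bot => Bot end.

Definition mulB (x y : B3) : B3 :=
  match y with
  | Yb => x
  | Nb => Nb
  | Bot => match x with Nb => Nb | _ => Bot end
  end.

Definition is_inf {T I : Type} (le : T -> T -> Prop) (f : I -> T) (x : T) : Prop :=
  (forall i, le x (f i)) /\ (forall y, (forall i, le y (f i)) -> le y x).

Definition is_inf_in {T I : Type} (P : T -> Prop) (le : T -> T -> Prop)
  (f : I -> T) (x : T) : Prop :=
  P x /\ (forall i, le x (f i)) /\
  (forall y, P y -> (forall i, le y (f i)) -> le y x).

(** States/Effects Chu spaces. Infima are over nonempty families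
    (down-complete Inf semi-lattices). *)
Record ChuSE : Type := {
  St : Type;
  Ef : Type;
  leS : St -> St -> Prop;
  leE : Ef -> Ef -> Prop;
  leS_refl : forall s, leS s s;
  leS_trans : forall s t u, leS s t -> leS t u -> leS s u;
  leS_antisym : forall s t, leS s t -> leS t s -> s = t;
  leE_refl : forall l, leE l l;
  leE_trans : forall l m n, leE l m -> leE m n -> leE l n;
  leE_antisym : forall l m, leE l m -> leE m l -> l = m;
  infS_ex : forall (I : Type) (f : I -> St), inhabited I -> exists s, is_inf leS f s;
  infE_ex : forall (I : Type) (f : I -> Ef), inhabited I -> exists l, is_inf leE f l;
  ev : Ef -> St -> B3;
  ev_infS : forall (l : Ef) (I : Type) (f : I -> St) (s : St),
      inhabited I -> is_inf leS f s -> is_inf leB (fun i => ev l (f i)) (ev l s);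
  ev_infE : forall (s : St) (I : Type) (f : I -> Ef) (l : Ef),
      inhabited I -> is_inf leE f l -> is_inf leB (fun i => ev (f i) s) (ev l s);
  negE : Ef -> Ef;
  ev_negE : forall l s, ev (negE l) s = negB (ev l s);
  YE : Ef;
  ev_YE : forall s, ev YE s = Yb
}.

(** The maximal tensor product Š_AB, as a subset of the maps E_A × E_B -> 𝔅. *)
Definition maxTensor (A B : ChuSE) (Phi : Ef A -> Ef B -> B3) : Prop :=
  (forall (lB : Ef B) (I : Type) (f : I -> Ef A) (lA : Ef A),
      inhabited I -> is_inf (leE A) f lA ->
      is_inf leB (fun i => Phi (f i) lB) (Phi lA lB)) /\
  (forall (lA : Ef A) (I : Type) (f : I -> Ef B) (lB : Ef B),
      inhabited I -> is_inf (leE B) f lB ->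
      is_inf leB (fun i => Phi lA (f i)) (Phi lA lB)) /\
  (forall lA, Phi (negE A lA) (YE B) = negB (Phi lA (YE B))) /\
  (forall lB, Phi (YE A) (negE B lB) = negB (Phi (YE A) lB)) /\
  Phi (YE A) (YE B) = Yb.

Definition leAB {A B : ChuSE} (Phi Psi : Ef A -> Ef B -> B3) : Prop :=
  forall lA lB, leB (Phi lA lB) (Psi lA lB).

Definition iota {A B : ChuSE} (sA : St A) (sB : St B) : Ef A -> Ef B -> B3 :=
  fun lA lB => mulB (ev A lA sA) (ev B lB sB).

(* Main.v *)
Require Import Defs.

Lemma mulB_comm x y : mulB x y = mulB y x.
Proof. destruct x, y; reflexivity. Qed.

Lemma L (I : Type) (g : I -> B3) x y :
  inhabited I -> is_inf leB g x -> is_inf leB (fun i => mulB (g i) y) (mulB x y).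
Proof.
  intros [i0] [Hlow Hgr]. split.
  - intro i. destruct (Hlow i) as [Hx|Hx]; rewrite <- ?Hx; subst;
      destruct y; try (destruct (g i)); unfold leB; simpl; auto.
  - intros z Hz. destruct z; [| |left; reflexivity]; right.
    + destruct y.
      * assert (Hg : forall i, g i = Yb).
        { intro i. specialize (Hz i). destruct Hz as [Hz|Hz]; [discriminate|].
          destruct (g i); simpl in Hz; congruence. }
        assert (Hl : leB Yb x) by (apply Hgr; intro i; rewrite Hg; right; reflexivity).
        destruct Hl as [Hl|Hl]; [discriminate|]. rewrite <- Hl. reflexivity.
      * specialize (Hz i0). destruct Hz as [Hz|Hz]; [discriminate|]. simpl in Hz. discriminate.
      * specialize (Hz i0). destruct Hz as [Hz|Hz]; [discriminate|].
        destruct (g i0); simpl in Hz; discriminate.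
    + destruct y.
      * assert (Hg : forall i, g i = Nb).
        { intro i. specialize (Hz i). destruct Hz as [Hz|Hz]; [discriminate|].
          destruct (g i); simpl in Hz; congruence. }
        assert (Hl : leB Nb x) by (apply Hgr; intro i; rewrite Hg; right; reflexivity).
        destruct Hl as [Hl|Hl]; [discriminate|]. rewrite <- Hl. reflexivity.
      * reflexivity.
      * assert (Hg : forall i, g i = Nb).
        { intro i. specialize (Hz i). destruct Hz as [Hz|Hz]; [discriminate|].
          destruct (g i); simpl in Hz; congruence. }
        assert (Hl : leB Nb x) by (apply Hgr; intro i; rewrite Hg; right; reflexivity).
        destruct Hl as [Hl|Hl]; [discriminate|]. rewrite <- Hl. reflexivity.
Qed.


Lemma inf_ext (I : Type) (g h : I -> B3) x x' :
  (forall i, g i = h i) -> x = x' -> is_inf leB g x -> is_inf leB h x'.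
Proof.
  intros E Ex [H1 H2]; subst; split.
  - intro i; rewrite <- E; auto.
  - intros y Hy; apply H2; intro i; rewrite E; auto.
Qed.

Lemma L' (I : Type) (g : I -> B3) x y :
  inhabited I -> is_inf leB g x -> is_inf leB (fun i => mulB y (g i)) (mulB y x).
Proof.
  intros Hi H. eapply inf_ext; [| | apply (L I g x y Hi H)].
  - intro; apply mulB_comm.
  - apply mulB_comm.
Qed.

Lemma iota_in (A B : ChuSE) (s : St A) (t : St B) : maxTensor A B (iota s t).
Proof.
  unfold maxTensor, iota. split; [|split; [|split; [|split]]].
  - intros lB I f lA Hi Hf. apply L; auto. apply ev_infE; auto.
  - intros lA I f lB Hi Hf. apply L'; auto. apply ev_infE; auto.
  - intro lA. rewrite ev_YE, ev_negE. destruct (ev A lA s); reflexivity.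
  - intro lB. rewrite ev_YE, ev_negE. destruct (ev B lB t); reflexivity.
  - rewrite !ev_YE. reflexivity.
Qed.

Theorem mainTheorem2 (A B : ChuSE) :
  (forall (I : Type) (sA : I -> St A) (sB : St B) (s : St A),
      inhabited I -> is_inf (leS A) sA s ->
      is_inf_in (maxTensor A B) (@leAB A B)
        (fun i => iota (sA i) sB) (iota s sB)) /\
  (forall (I : Type) (sB : I -> St B) (sA : St A) (s : St B),
      inhabited I -> is_inf (leS B) sB s ->
      is_inf_in (maxTensor A B) (@leAB A B)
        (fun i => iota sA (sB i)) (iota sA s)).
Proof.
  split.
  - intros I sA sB s Hi Hs. split; [apply iota_in|split].
    + intros i lA lB. unfold iota.
      apply (proj1 (L I _ _ _ Hi (ev_infS A lA I sA s Hi Hs))).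
    + intros Phi _ HPhi lA lB. unfold iota.
      apply (proj2 (L I _ _ _ Hi (ev_infS A lA I sA s Hi Hs))).
      intro i. apply HPhi.
  - intros I sB sA s Hi Hs. split; [apply iota_in|split].
    + intros i lA lB. unfold iota.
      apply (proj1 (L' I _ _ _ Hi (ev_infS B lB I sB s Hi Hs))).
    + intros Phi _ HPhi lA lB. unfold iota.
      apply (proj2 (L' I _ _ _ Hi (ev_infS B lB I sB s Hi Hs))).
      intro i. apply HPhi.
Qed.
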